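(* Let $\bm x \in \Delta_n \setminus \{\bm e_1,\dots,\bm e_n, \tfrac1n \bm e\}$. Then the function $F(p) = \dfrac{1 - \|\bm x\|_p}{D_p\,\|\bm x\|_p}$ is strictly decreasing in $p$ for $p \geqslant 2$.
   Context: For $\bm x \in \mathbb{R}^n_{\geqslant 0}$ and real $p\geqslant 1$, $\|\bm x\|_p = (\sum_{i=1}^n x_i^p)^{1/p}$, and $D_p = n^{1-1/p}-1$. $\Delta_n = \{\bm x \in \mathbb{R}^n_{\geqslant 0} : \sum_{i=1}^n x_i = 1\}$ is the probability simplex, $\bm e_i$ is the $i$-th standard unit vector and $\bm e$ the all-ones vector in $\mathbb{R}^n$. *)

(* Defs.v *)
From mathcomp Require Import all_boot all_order all_algebra.
From mathcomp Require Import all_classical all_reals all_analysis.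
Set Implicit Arguments. Unset Strict Implicit. Unset Printing Implicit Defensive.
Import Order.TTheory GRing.Theory Num.Theory.
Local Open Scope ring_scope.

Definition pnorm (R : realType) (n : nat) (p : R) (x : 'I_n -> R) : R :=
  (\sum_(i < n) x i `^ p) `^ p^-1.

Definition Dp (R : realType) (n : nat) (p : R) : R :=
  (n%:R) `^ (1 - p^-1) - 1.

Definition in_simplex (R : realType) (n : nat) (x : 'I_n -> R) : Prop :=
  (forall i, 0 <= x i) /\ \sum_(i < n) x i = 1.

Definition unit_vec (R : realType) (n : nat) (i : 'I_n) : 'I_n -> R :=
  fun j => if j == i then 1 else 0.

Definition Ffun (R : realType) (n : nat) (x : 'I_n -> R) (p : R) : R :=
  (1 - pnorm p x) / (Dp n p * pnorm p x).

(* Main.v *)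
Require Import Defs.
From mathcomp Require Import all_boot all_order all_algebra.
From mathcomp Require Import all_classical all_reals all_analysis.
From mathcomp Require Import ring lra.
Import Order.TTheory GRing.Theory Num.Theory.
Local Open Scope ring_scope.


Lemma bern_exp {R : realType} (r y : R) : 1 < r -> y != 0 -> 1 + r * (expR y - 1) < expR (r * y).
Proof.
move=> r1 y0.
have -> : r * y = y + (r - 1) * y by ring.
rewrite expRD.
have h1 : 1 + (r - 1) * y < expR ((r - 1) * y).
  apply: expR_gt1Dx; rewrite mulf_neq0 // subr_eq0 gt_eqF //.
have h2 := expR_ge1Dx (- y).
rewrite expRN in h2.
have E0 := expR_gt0 y.
have h3 : expR y * (1 - y) <= 1.
  have := ler_wpM2l (ltW E0) h2. by rewrite mulfV ?gt_eqF // addrC.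
set E := expR y in E0 h3 *; set G := expR _ in h1 *.
have h4 : E * (1 + (r - 1) * y) < E * G by rewrite ltr_pM2l.
nra.
Qed.

Lemma cbern_exp {R : realType} (c t : R) : 0 < c -> c < 1 -> t != 0 ->
  expR (c * t) < 1 + c * (expR t - 1).
Proof.
move=> c0 c1 t0.
have r1 : 1 < c^-1 by rewrite invf_gt1.
have := @bern_exp _ (c^-1) (c * t) r1 (mulf_neq0 (lt0r_neq0 c0) t0).
rewrite mulrA mulVf ?gt_eqF // mul1r => h.
move: h; rewrite -(ltr_pM2l c0) mulrDr mulrA mulfV ?gt_eqF // mul1r.
nra.
Qed.

Lemma cbern_exp_le {R : realType} (c t : R) : 0 < c -> c < 1 ->
  expR (c * t) <= 1 + c * (expR t - 1).
Proof.
move=> c0 c1; have [->|t0] := eqVneq t 0.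
  by rewrite mulr0 expR0 subrr mulr0 addr0.
exact/ltW/cbern_exp.
Qed.

Lemma bern_powR {R : realType} (r z : R) : 1 < r -> 0 <= z -> z != 1 -> 1 + r * (z - 1) < z `^ r.
Proof.
move=> r1 z0 z1.
have [->|zp] := eqVneq z 0.
  rewrite powR0 ?gt_eqF //; last by rewrite (lt_trans _ r1).
  lra.
have zp' : 0 < z by rewrite lt_neqAle eq_sym zp.
rewrite /powR (negbTE zp) -{1}(lnK zp').
apply: bern_exp => //.
by rewrite ln_eq0.
Qed.

Lemma bern_powR_le {R : realType} (r z : R) : 1 < r -> 0 <= z -> 1 + r * (z - 1) <= z `^ r.
Proof.
move=> r1 z0; have [->|z1] := eqVneq z 1.
  by rewrite powR1 subrr mulr0 addr0.
exact/ltW/bern_powR.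
Qed.

Lemma chord {R : realType} (u w a b : R) : 0 < w -> w < u -> 0 < a -> a < b ->
  (expR (w * b) - 1) / (expR (u * b) - 1) < (expR (w * a) - 1) / (expR (u * a) - 1).
Proof.
move=> w0 wu a0 ab.
have u0 : 0 < u by apply: lt_trans wu.
have un : u != 0 by apply: lt0r_neq0.
pose c := w / u.
have c0 : 0 < c by rewrite divr_gt0.
have c1 : c < 1 by rewrite ltr_pdivrMr // mul1r.
pose A := expR (w * a); pose B := expR (w * b).
pose X := expR (u * a); pose Y := expR (u * b).
have A0 : 0 < A := expR_gt0 _.
have X0 : 0 < X := expR_gt0 _.
have Xn : X != 0 by apply: lt0r_neq0.
have X1 : 1 < X by rewrite /X expR_gt1 mulr_gt0.
have XY : X < Y by rewrite /X /Y ltr_expR ltr_pM2l.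
have ba0 : b - a != 0 by apply: lt0r_neq0; rewrite subr_gt0.
have i1 := @cbern_exp _ c (u * (b - a)) c0 c1 (mulf_neq0 un ba0).
have ua : - (u * a) != 0 by rewrite oppr_eq0 mulf_neq0 // lt0r_neq0.
have i2 := @cbern_exp _ c (- (u * a)) c0 c1 ua.
pose K := c * A / X.
have f1 : B < A + K * (Y - X).
  have e1 : A * expR (c * (u * (b - a))) = B.
    rewrite /A /B -expRD; congr expR; rewrite /c; by field.
  have e2 : A * (1 + c * (expR (u * (b - a)) - 1)) = A + K * (Y - X).
    rewrite (mulrBr u b a) expRB -/X -/Y /K; by field.
  by have h := i1; rewrite -(ltr_pM2l A0) e1 e2 in h.
have f2 : 1 < A - K * (X - 1).
  have e1 : A * expR (c * - (u * a)) = 1.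
    rewrite /A -expRD -expR0; congr expR; rewrite /c; by field.
  have e2 : A * (1 + c * (expR (- (u * a)) - 1)) = A - K * (X - 1).
    rewrite expRN -/X /K; by field.
  by have h := i2; rewrite -(ltr_pM2l A0) e1 e2 in h.
have K0 : 0 < K by rewrite /K divr_gt0 // mulr_gt0.
have key : (B - 1) * (X - 1) < (A - 1) * (Y - 1).
  have h1 : (B - 1) * (X - 1) < (A - 1 + K * (Y - X)) * (X - 1).
    rewrite ltr_pM2r ?subr_gt0 //; move: f1; set Z := K * (Y - X); lra.
  have h2 : K * (X - 1) * (Y - X) < (A - 1) * (Y - X).
    rewrite ltr_pM2r ?subr_gt0 //; move: f2; set Z := K * (X - 1); lra.
  nra.
rewrite -/A -/B -/X -/Y ltr_pdivlMr ?subr_gt0 // mulrAC ltr_pdivrMr ?subr_gt0 ?(lt_trans X1) //.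
Qed.


Lemma final_ineq {R : realType} (u L M p q : R) : 1 < p -> p < q -> 0 < u ->
  (1 - p) * u < L -> L < 0 -> L / (p - 1) <= M / (q - 1) ->
  (1 - expR (q^-1 * M)) / ((expR ((1 - q^-1) * u) - 1) * expR (q^-1 * M)) <
  (1 - expR (p^-1 * L)) / ((expR ((1 - p^-1) * u) - 1) * expR (p^-1 * L)).
Proof.
move=> p1 pq u0 Lu L0 LM.
have q1 : 1 < q by apply: lt_trans pq.
have p0 : 0 < p by apply: lt_trans p1.
have q0 : 0 < q by apply: lt_trans q1.
have pn : p != 0 by apply: lt0r_neq0.
have qn : q != 0 by apply: lt0r_neq0.
have p1n : p - 1 != 0 by apply: lt0r_neq0; rewrite subr_gt0.
have q1n : q - 1 != 0 by apply: lt0r_neq0; rewrite subr_gt0.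
pose w := - L / (p - 1).
have w0 : 0 < w by rewrite /w divr_gt0 ?oppr_gt0 ?subr_gt0.
have wu : w < u.
  rewrite /w ltr_pdivrMr ?subr_gt0 //. lra.
pose a := 1 - p^-1; pose b := 1 - q^-1.
have a0 : 0 < a by rewrite /a subr_gt0 invf_lt1.
have ab : a < b by rewrite /a /b ltrD2l ltrN2 ltf_pV2 // posrE.
have X1 : 0 < expR (u * a) - 1 by rewrite subr_gt0 expR_gt1 mulr_gt0.
have b0 : 0 < b by apply: lt_trans ab.
have Y1 : 0 < expR (u * b) - 1 by rewrite subr_gt0 expR_gt1 mulr_gt0.
have eL : p^-1 * L = - (w * a) by rewrite /w /a; field; rewrite pn p1n.
have eR : (1 - expR (p^-1 * L)) / ((expR ((1 - p^-1) * u) - 1) * expR (p^-1 * L)) =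
   (expR (w * a) - 1) / (expR (u * a) - 1).
  rewrite eL expRN (mulrC (1 - p^-1)) -/a.
  by field; rewrite gt_eqF // gt_eqF ?expR_gt0.
rewrite eR.
apply: (le_lt_trans _ (@chord _ u w a b w0 wu a0 ab)).
have eM : (1 - expR (q^-1 * M)) / ((expR ((1 - q^-1) * u) - 1) * expR (q^-1 * M)) =
   (expR (- (q^-1 * M)) - 1) / (expR (u * b) - 1).
  rewrite expRN (mulrC (1 - q^-1)) -/b.
  by field; rewrite gt_eqF // gt_eqF ?expR_gt0.
rewrite eM ler_pM2r ?invr_gt0 // lerD2r ler_expR.
have qq : 0 < (q - 1) / q by rewrite divr_gt0 // subr_gt0.
have e1 : M / (q - 1) * ((q - 1) / q) = q^-1 * M by field; rewrite qn q1n.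
have e2 : L / (p - 1) * ((q - 1) / q) = - (w * b).
  by rewrite /w /b; field; rewrite ?qn ?pn ?p1n ?q1n.
have := LM; rewrite -(ler_pM2r qq) e1 e2.
by rewrite lerNl.
Qed.

Lemma powRE_pos {R : realType} (a r : R) : 0 < a -> a `^ r = expR (r * ln a).
Proof. by move=> a0; rewrite /powR gt_eqF. Qed.

Lemma sum_strict {R : realType} n (f g : 'I_n -> R) i : (forall j, f j <= g j) -> f i < g i ->
  \sum_(j < n) f j < \sum_(j < n) g j.
Proof.
move=> fg fgi; rewrite (bigD1 i) //= [X in _ < X](bigD1 i) //=.
by apply: ltr_leD => //; apply: ler_sum => j _.
Qed.

Lemma simplex_le1 {R : realType} n (x : 'I_n -> R) i : (forall j, 0 <= x j) -> \sum_(j < n) x j = 1 -> x i <= 1.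
Proof.
move=> h0 h1; rewrite -h1 (bigD1 i) //= lerDl.
by apply: sumr_ge0 => j _.
Qed.

Lemma S_gt {R : realType} n (x : 'I_n -> R) (r : R) : (forall j, 0 <= x j) -> \sum_(j < n) x j = 1 ->
  x <> (fun _ => n%:R^-1) -> 1 < r ->
  expR ((1 - r) * ln n%:R) < \sum_(j < n) x j `^ r.
Proof.
move=> h0 h1 hu r1.
have n0 : (0 < n)%N.
  case: n x h0 h1 hu => [|n] x h0 h1 hu //.
  by move: h1; rewrite big_ord0 => /eqP; rewrite eq_sym oner_eq0.
have nR : 0 < (n%:R : R) by rewrite ltr0n.
have [i hi] : exists i, x i != n%:R^-1.
  case: (pselect (exists i, x i != n%:R^-1)) => // H; exfalso; apply: hu.
  apply: funext => i; case: (eqVneq (x i) n%:R^-1) => // hi.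
  by exfalso; apply: H; exists i.
have key : \sum_(j < n) (1 + r * (n%:R * x j - 1)) < \sum_(j < n) (n%:R `^ r * x j `^ r).
  apply: (@sum_strict _ _ _ _ i).
    move=> j; rewrite -powRM ?ler0n //; apply: bern_powR_le => //.
    by rewrite mulr_ge0 ?ler0n.
  rewrite -powRM ?ler0n //; apply: bern_powR => //.
    by rewrite mulr_ge0 ?ler0n.
  apply: contra hi => /eqP e; apply/eqP.
  by rewrite -(mulKf (lt0r_neq0 nR) (x i)) e mulr1.
have e1 : \sum_(j < n) (1 + r * (n%:R * x j - 1)) = n%:R.
  have -> : \sum_(j < n) (1 + r * (n%:R * x j - 1)) =
     \sum_(j < n) ((1 - r) + (r * n%:R) * x j).
    by apply: eq_bigr => j _; ring.
  rewrite big_split /= -mulr_sumr h1 sumr_const card_ord -mulr_natr; ring.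
rewrite e1 -mulr_sumr powRE_pos // in key.
rewrite mulrBl mul1r expRB ltr_pdivrMr ?expR_gt0 // lnK ?posrE // mulrC; exact: key.
Qed.

Lemma S_lt1 {R : realType} n (x : 'I_n -> R) (r : R) : (forall j, 0 <= x j) -> \sum_(j < n) x j = 1 ->
  (forall i : 'I_n, x <> @unit_vec R n i) -> 1 < r ->
  \sum_(j < n) x j `^ r < 1.
Proof.
move=> h0 h1 hv r1.
have r0 : 0 < r by apply: lt_trans r1.
have [i /andP [xi0 xi1]] : exists i, 0 < x i < 1.
  case: (pselect (exists i, 0 < x i < 1)) => // H; exfalso.
  have [i xi] : exists i, x i != 0.
    case: (pselect (exists i, x i != 0)) => // H2; exfalso.
    have : \sum_(j < n) x j = 0.
      apply: big1 => j _.
      by case: (eqVneq (x j) 0) => // hj; exfalso; apply: H2; exists j.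
    by rewrite h1 => /eqP; rewrite oner_eq0.
  have xi1 : x i = 1.
    have := @simplex_le1 _ n x i h0 h1; rewrite le_eqVlt => /orP [/eqP //|lt].
    by exfalso; apply: H; exists i; rewrite lt andbT lt_neqAle eq_sym xi h0.
  have rest : \sum_(j < n | j != i) x j = 0.
    by move: h1; rewrite (bigD1 i) //= xi1; lra.
  apply: (hv i); apply: funext => j; rewrite /unit_vec.
  case: eqP => [->//|/eqP ne].
  exact: (psumr_eq0P (fun k _ => h0 k) rest).
rewrite -h1; apply: (@sum_strict _ _ _ _ i).
  move=> j; have [->|xj] := eqVneq (x j) 0; first by rewrite powR0 ?gt_eqF.
  apply: ge1r_powR; last exact: ltW.
  by rewrite lt_neqAle eq_sym xj h0 (@simplex_le1 _ n x j h0 h1).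
rewrite -(mulr_powRB1 (ltW xi0)) //.
rewrite -[X in _ < X]mulr1 ltr_pM2l //.
have := @gt0_ltr_powR R (r - 1) _ (x i) 1.
rewrite powR1 => -> //; first by rewrite subr_gt0.
  by rewrite nnegrE ltW.
by rewrite nnegrE.
Qed.


Lemma S_interp {R : realType} n (x : 'I_n -> R) (p q : R) : (forall j, 0 <= x j) -> \sum_(j < n) x j = 1 ->
  1 < p -> p < q -> 0 < \sum_(j < n) x j `^ p -> 0 < \sum_(j < n) x j `^ q ->
  ln (\sum_(j < n) x j `^ p) / (p - 1) <= ln (\sum_(j < n) x j `^ q) / (q - 1).
Proof.
move=> h0 h1 p1 pq Sp Sq.
have q1 : 1 < q by apply: lt_trans pq.
have p0 : 0 < p by apply: lt_trans p1.
have q0 : 0 < q by apply: lt_trans q1.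
have p1n : p - 1 != 0 by apply: lt0r_neq0; rewrite subr_gt0.
have q1n : q - 1 != 0 by apply: lt0r_neq0; rewrite subr_gt0.
set T := \sum_(j < n) x j `^ q in Sq *.
pose lam := (p - 1) / (q - 1).
have lam0 : 0 < lam by rewrite divr_gt0 // subr_gt0.
have lam1 : lam < 1 by rewrite ltr_pdivrMr ?subr_gt0 // mul1r ltrD2r.
pose K := expR (lam * ln T).
have K0 : 0 < K := expR_gt0 _.
have Tn : T != 0 by apply: lt0r_neq0.
have per : forall j, x j `^ p <= K * ((1 - lam) * x j + lam * (x j `^ q / T)).
  move=> j; have [->|xj] := eqVneq (x j) 0.
    by rewrite !powR0 ?gt_eqF // !mul0r !mulr0 addr0 mulr0.
  have xj0 : 0 < x j by rewrite lt_neqAle eq_sym xj h0.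
  rewrite !powRE_pos //.
  set l := ln (x j).
  have := @cbern_exp_le _ lam ((q - 1) * l - ln T) lam0 lam1.
  rewrite -(ler_pM2l (mulr_gt0 K0 (expR_gt0 l))).
  have e1 : K * expR l * expR (lam * ((q - 1) * l - ln T)) = expR (p * l).
    by rewrite /K -!expRD; congr expR; rewrite /lam; field.
  have e2 : K * expR l * (1 + lam * (expR ((q - 1) * l - ln T) - 1)) =
            K * ((1 - lam) * x j + lam * (expR (q * l) / T)).
    have -> : (q - 1) * l - ln T = q * l - (l + ln T) by ring.
    rewrite expRB expRD lnK ?posrE // -/l (lnK (x:=x j)) ?posrE //.
    by field; rewrite Tn gt_eqF ?expR_gt0 // gt_eqF.
  by rewrite e1 e2.
have hS : \sum_(j < n) x j `^ p <= K.
  apply: (le_trans (ler_sum _ (fun j _ => per j))).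
  rewrite -mulr_sumr big_split /= -!mulr_sumr -mulr_suml h1 -/T mulfV //.
  by rewrite !mulr1 subrK mulr1.
have hl : ln (\sum_(j < n) x j `^ p) <= lam * ln T.
  by rewrite -(expRK (lam * ln T)) ler_ln ?posrE.
rewrite ler_pdivrMr ?subr_gt0 //.
have -> : ln T / (q - 1) * (p - 1) = lam * ln T by rewrite /lam; field.
exact: hl.
Qed.



Theorem proposition4 (R : realType) (n : nat) (x : 'I_n -> R) :
  in_simplex x ->
  (forall i : 'I_n, x <> @unit_vec R n i) ->
  x <> (fun _ => n%:R^-1) ->
  forall p q : R, 2 <= p -> p < q -> Ffun x q < Ffun x p.
Proof.
move=> [h0 h1] hv hu p q p2 pq.
have p1 : 1 < p by apply: lt_le_trans p2; rewrite ltr1n.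
have q1 : 1 < q by apply: lt_trans pq.
have Sgp := @S_gt _ n x p h0 h1 hu p1.
have Sgq := @S_gt _ n x q h0 h1 hu q1.
have Slp := @S_lt1 _ n x p h0 h1 hv p1.
have Sp0 : 0 < \sum_(j < n) x j `^ p by apply: lt_trans Sgp; apply: expR_gt0.
have Sq0 : 0 < \sum_(j < n) x j `^ q by apply: lt_trans Sgq; apply: expR_gt0.
have hI := @S_interp _ n x p q h0 h1 p1 pq Sp0 Sq0.
have n0 : (0 < n)%N.
  case: n x h0 h1 {hv hu Sgp Sgq Slp Sp0 Sq0 hI} => [|n] x h0 h1 //.
  by move: h1; rewrite big_ord0 => /eqP; rewrite eq_sym oner_eq0.
have nR : 0 < (n%:R : R) by rewrite ltr0n.
set L := ln (\sum_(j < n) x j `^ p).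
set M := ln (\sum_(j < n) x j `^ q).
set u := ln (n%:R : R).
have L0 : L < 0 by apply: ln_lt0; rewrite Sp0 Slp.
have Lu : (1 - p) * u < L by rewrite -ltr_expR /L lnK ?posrE.
have u0 : 0 < u.
  have : (1 - p) * u < 0 by apply: lt_trans L0.
  nra.
have := @final_ineq _ u L M p q p1 pq u0 Lu L0 hI.
rewrite /Ffun /pnorm /Dp !powRE_pos //.
Qed.
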